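(* For a generic relaxed scenario $\mathscr{S}=(T,S,\sigma,\mu,\tau_T,\tau_S)$ it holds that $G_{=}(\mathscr{S})=\mathrm{sQO}(\mathscr{S})$ and thus $G_{=}(\mathscr{S})\subseteq\mathrm{wQO}(\mathscr{S})$. In particular, if $\mathscr{S}$ has no HGT-edges, or if $S$ and $T$ are binary, then $\mathrm{sQO}(\mathscr{S})$ is a cograph.
   Context: All trees are planted phylogenetic trees: a tree $T$ has a distinguished vertex $0_T$ of degree $1$ whose unique neighbor $\rho_T$ is the root, and every vertex other than $0_T$ and the leaves $L(T)$ has at least two children; it is binary if each such vertex has exactly two children. For $x,y\in V(T)$ write $y\preceq_T x$ if $x$ lies on the path from $0_T$ to $y$; edges are written $uv$ with $v\prec_T u$. The order extends to $V(T)\cup E(T)$: for a vertex $x$ and an edge $e=uv$, $x\preceq_T e$ iff $x\preceq_T v$, and $e\preceq_T x$ iff $u\preceq_T x$; for edges, $uv\preceq_T ab$ iff $v\preceq_T b$. Two elements are comparable if one is $\preceq$ the other. $V^0(T)=V(T)\setminus(L(T)\cup\{0_T\})$; $\mathrm{lca}_T$ denotes the last common ancestor. A time map for $T$ is $\tau_T\colon V(T)\to\mathbb{R}$ with $\tau_T(x)<\tau_T(y)$ whenever $x\prec_T y$. A relaxed scenario $\mathscr{S}=(T,S,\sigma,\mu,\tau_T,\tau_S)$ consists of a gene tree $T$ with time map $\tau_T$, a species tree $S$ with time map $\tau_S$, a map $\sigma\colon L(T)\to M$ with $M\subseteq L(S)$, and a map $\mu\colon V(T)\to V(S)\cup E(S)$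 such that (S0) $\mu(x)=0_S$ iff $x=0_T$; (S1) $\mu(x)\in L(S)$ iff $x\in L(T)$, in which case $\mu(x)=\sigma(x)$; (S2) if $\mu(x)\in V(S)$ then $\tau_S(\mu(x))=\tau_T(x)$; (S3) if $\mu(x)=uv\in E(S)$ then $\tau_S(v)<\tau_T(x)<\tau_S(u)$. The EDT graph $G_{=}(\mathscr{S})$ has vertex set $L(T)$ and an edge $xy$ ($x\ne y$) iff $\tau_T(\mathrm{lca}_T(x,y))=\tau_S(\mathrm{lca}_S(\sigma(x),\sigma(y)))$. An edge $uv\in E(T)$ is an HGT-edge if $\mu(u)$ and $\mu(v)$ are incomparable in $S$. The scenario is generic if for all $v\in V^0(T)$ and $U\in V^0(S)$, $\tau_T(v)=\tau_S(U)$ implies $\mu(v)=U$. $\mathrm{wQO}(\mathscr{S})$ (weak quasi-orthology graph) has vertex set $L(T)$ and edges $xy$, $x\neq y$, with $\mu(\mathrm{lca}_T(x,y))\in V^0(S)$; $\mathrm{sQO}(\mathscr{S})$ (strict quasi-orthology graph) has vertex set $L(T)$ and edges $xy$, $x\ne y$, with $\mu(\mathrm{lca}_T(x,y))=\mathrm{lca}_S(\sigma(x),\sigma(y))$. A cograph is a graph with no induced path on four vertices. *)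

(* Defs.v *)
From HB Require Import structures.
From mathcomp Require Import all_boot all_order all_algebra.
From mathcomp Require Import reals.
Set Implicit Arguments. Unset Strict Implicit. Unset Printing Implicit Defensive.
Import Order.TTheory GRing.Theory Num.Theory.
Local Open Scope ring_scope.

(* A planted phylogenetic tree, given by a parent map [par] on a finite vertex
   set, with distinguished planted root [root0] (= 0_T), [par root0 = root0],
   and every vertex reaches [root0] by iterating [par] (so there are no other
   cycles: the structure is a tree rooted at 0_T).  Edges are the pairs
   (par v, v) with v <> root0; an edge is represented by its lower endpoint. *)
Record ptree := PTree {
  vert : finType;
  par : vert -> vert;
  root0 : vert;
  par_root0 : par root0 = root0;
  to_root0 : forall v, fconnect par v root0;
  planted_root : #|[set w | (par w == root0) && (w != root0)]| = 1%N;
  phylo : forall v, v != root0 ->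
    [set w | (par w == v) && (w != root0)] != set0 ->
    (1 < #|[set w | (par w == v) && (w != root0)]|)%N
}.

Arguments par : clear implicits.
Arguments root0 : clear implicits.

Section Trees.
Variable T : ptree.

Definition children (x : vert T) : {set vert T} :=
  [set w | (par T w == x) && (w != root0 T)].

Definition leaf (x : vert T) : bool := (x != root0 T) && (children x == set0).

Definition inner (x : vert T) : bool := (x != root0 T) && ~~ leaf x.

Definition binary : Prop := forall x, inner x -> #|children x| = 2%N.

(* y <=_T x  iff  x lies on the path from 0_T to y *)
Definition tle (y x : vert T) : bool := fconnect (par T) y x.
Definition tlt (y x : vert T) : bool := (y != x) && tle y x.

Definition is_lca (x y z : vert T) : bool :=
  [&& tle x z, tle y z & [forall w, (tle x w && tle y w) ==> tle z w]].
Definition lca (x y : vert T) : vert T :=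
  odflt (root0 T) [pick z | is_lca x y z].

(* Elements of V(T) u E(T): [inl x] is the vertex x, [inr v] is the edge
   (par v) v (only meaningful for v <> 0_T). *)
Definition loc := (vert T + vert T)%type.

Definition valid_loc (a : loc) : bool :=
  match a with inl _ => true | inr v => v != root0 T end.

Definition lle (a b : loc) : bool :=
  match a, b with
  | inl x, inl y => tle x y
  | inl x, inr v => tle x v
  | inr v, inl x => tle (par T v) x
  | inr v, inr b => tle v b
  end.

Definition comparable (a b : loc) : bool := lle a b || lle b a.

Definition time_map (R : realType) (t : vert T -> R) : Prop :=
  forall x y, tlt x y -> t x < t y.

End Trees.

Section Scenario.
Variables (R : realType) (T S : ptree).
Variables (sigma : vert T -> vert S) (mu : vert T -> loc S).
Variables (tT : vert T -> R) (tS : vert S -> R).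

Definition relaxed_scenario : Prop :=
  time_map tT /\ time_map tS /\
  (forall x, leaf x -> leaf (sigma x)) /\
  (forall x, valid_loc (mu x)) /\
  (forall x, mu x = inl (root0 S) <-> x = root0 T) /\
  (forall x, (exists l, mu x = inl l /\ leaf l) <-> leaf x) /\
  (forall x, leaf x -> mu x = inl (sigma x)) /\
  (forall x u, mu x = inl u -> tS u = tT x) /\
  (forall x v, mu x = inr v -> tS v < tT x /\ tT x < tS (par S v)).

Definition generic : Prop :=
  forall v U, inner v -> inner U -> tT v = tS U -> mu v = inl U.

Definition edt_edge (x y : vert T) : Prop :=
  [/\ leaf x, leaf y, x != y & tT (lca x y) = tS (lca (sigma x) (sigma y))].

Definition wqo_edge (x y : vert T) : Prop :=
  [/\ leaf x, leaf y, x != y & exists U, mu (lca x y) = inl U /\ inner U].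

Definition sqo_edge (x y : vert T) : Prop :=
  [/\ leaf x, leaf y, x != y & mu (lca x y) = inl (lca (sigma x) (sigma y))].

Definition hgt_edge (v : vert T) : Prop :=
  v != root0 T /\ ~~ comparable (mu (par T v)) (mu v).

End Scenario.

Definition cograph (V : finType) (P : pred V) (E : V -> V -> Prop) : Prop :=
  ~ exists a b c d,
      [/\ [/\ P a, P b, P c & P d],
          uniq [:: a; b; c; d],
          [/\ E a b, E b c & E c d] &
          [/\ ~ E a c, ~ E a d & ~ E b d]].

(* Main.v *)
Require Import Defs.
From HB Require Import structures.
From mathcomp Require Import all_boot all_order all_algebra.
From mathcomp Require Import reals.
From mathcomp Require Import lra.
Set Implicit Arguments. Unset Strict Implicit. Unset Printing Implicit Defensive.
Import Order.TTheory GRing.Theory Num.Theory.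
Local Open Scope ring_scope.

Section Tree.
Variables (R : realType) (T : ptree) (t : vert T -> R).
Hypothesis Ht : time_map t.

Lemma tle_refl (x : vert T) : tle x x.
Proof. exact: connect0. Qed.

Lemma tle_trans (x y z : vert T) : tle x y -> tle y z -> tle x z.
Proof. exact: connect_trans. Qed.

Lemma tle_par (x : vert T) : tle x (par T x).
Proof. exact: fconnect1. Qed.

Lemma tle_iter (x y : vert T) : tle x y -> exists n, y = iter n (par T) x.
Proof. move=> h; exists (findex (par T) x y); by rewrite iter_findex. Qed.

Lemma tle_iterE n (x : vert T) : tle x (iter n (par T) x).
Proof. exact: fconnect_iter. Qed.

Lemma tle_root (x : vert T) : tle x (Defs.root0 T).
Proof. exact: to_root0. Qed.

Lemma par_fix (x : vert T) : par T x = x -> x = Defs.root0 T.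
Proof.
move=> E; have [n Hn] := tle_iter (tle_root x).
have : iter n (par T) x = x by elim: n {Hn} => //= n ->.
by rewrite -Hn.
Qed.

Lemma par_neq (x : vert T) : x != Defs.root0 T -> x != par T x.
Proof.
move=> h; apply/negP => /eqP E; move: h; by rewrite (par_fix (esym E)) eqxx.
Qed.

Lemma tle_total (x a b : vert T) : tle x a -> tle x b -> tle a b || tle b a.
Proof.
move=> /tle_iter [m ->] /tle_iter [n ->]; case: (leqP m n) => h.
  by rewrite -(subnK h) iterD tle_iterE.
by rewrite -(subnK (ltnW h)) iterD tle_iterE orbT.
Qed.

Lemma tle_antisym (x y : vert T) : tle x y -> tle y x -> x = y.
Proof.
case: (eqVneq x y) => // ne Hxy Hyx.
have h1 : t x < t y by apply: Ht; rewrite /tlt ne Hxy.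
have h2 : t y < t x by apply: Ht; rewrite /tlt eq_sym ne Hyx.
by have := lt_trans h1 h2; rewrite ltxx.
Qed.

Lemma tle_time (x y : vert T) : tle x y -> t x <= t y.
Proof.
case: (eqVneq x y) => [-> _|ne h]; first exact: lexx.
by apply: ltW; apply: Ht; rewrite /tlt ne h.
Qed.

Lemma tlt_time (x y : vert T) : x != y -> tle x y -> t x < t y.
Proof. by move=> ne h; apply: Ht; rewrite /tlt ne h. Qed.

Lemma eq_time (x y : vert T) : tle x y -> t x = t y -> x = y.
Proof.
case: (eqVneq x y) => // ne h E; have := tlt_time ne h; by rewrite E ltxx.
Qed.

Lemma tle_step (x y : vert T) : tle x y -> x = y \/ tle (par T x) y.
Proof.
move=> /tle_iter [[|n] ->]; [by left| right]; rewrite iterSr; exact: tle_iterE.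
Qed.

Lemma tlt_par (x y : vert T) : x != y -> tle x y -> tle (par T x) y.
Proof. move=> ne /tle_step [E|//]; by rewrite E eqxx in ne. Qed.

Lemma side (w x : vert T) : w != x -> tle w x ->
  exists c, [/\ par T c = x, c != Defs.root0 T & tle w c].
Proof.
move=> ne /tle_iter [k Hk].
have ex : exists n, iter n (par T) w == x by exists k; rewrite Hk.
case: (ex_minnP ex) => m /eqP Hm Hmin.
case: m Hm Hmin => [/= E|m Hm Hmin]; first by rewrite E eqxx in ne.
exists (iter m (par T) w); split; [by rewrite -iterS| |exact: tle_iterE].
apply/negP => /eqP E.
have : iter m (par T) w == x by rewrite -Hm iterS E Defs.par_root0.
by move/Hmin; rewrite ltnn.
Qed.

Lemma siblings (c1 c2 : vert T) : par T c1 = par T c2 -> c1 != Defs.root0 T ->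
  c2 != Defs.root0 T -> tle c1 c2 -> c1 = c2.
Proof.
case: (eqVneq c1 c2) => // ne E n1 n2 h.
have h2 := tlt_par ne h; rewrite E in h2.
have E2 := tle_antisym h2 (tle_par c2).
by move: n2; rewrite (par_fix E2) eqxx.
Qed.

Lemma side_uniq (w c1 c2 : vert T) : par T c1 = par T c2 -> c1 != Defs.root0 T ->
  c2 != Defs.root0 T -> tle w c1 -> tle w c2 -> c1 = c2.
Proof.
move=> E n1 n2 h1 h2; case/orP: (tle_total h1 h2) => h.
  exact: siblings.
by apply/esym; apply: siblings.
Qed.

Lemma lca_ex (x y : vert T) : exists z, is_lca x y z.
Proof.
have ex : exists n, tle y (iter n (par T) x).
  have [k Hk] := tle_iter (tle_root x); exists k; rewrite -Hk; exact: tle_root.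
case: (ex_minnP ex) => n Hn Hmin; exists (iter n (par T) x).
apply/and3P; split; [exact: tle_iterE | exact: Hn | ].
apply/forallP => w; apply/implyP => /andP [hx hy].
have [m Em] := tle_iter hx; rewrite Em in hy *.
case: (leqP n m) => h; first by rewrite -(subnK h) iterD tle_iterE.
by have := Hmin m hy; rewrite leqNgt h.
Qed.

Lemma lcaP (x y : vert T) : is_lca x y (lca x y).
Proof.
rewrite /lca; case: pickP => [z Hz //|H].
by have [z Hz] := lca_ex x y; rewrite H in Hz.
Qed.

Lemma lca_l (x y : vert T) : tle x (lca x y).
Proof. by case/and3P: (lcaP x y). Qed.
Lemma lca_r (x y : vert T) : tle y (lca x y).
Proof. by case/and3P: (lcaP x y). Qed.
Lemma lca_min (x y w : vert T) : tle x w -> tle y w -> tle (lca x y) w.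
Proof.
move=> hx hy; case/and3P: (lcaP x y) => _ _ /forallP /(_ w) /implyP; apply.
by rewrite hx hy.
Qed.

Lemma lca_uniq (x y z : vert T) : tle x z -> tle y z ->
  (forall w, tle x w -> tle y w -> tle z w) -> lca x y = z.
Proof.
move=> hx hy H; apply: tle_antisym; [exact: lca_min | apply: H].
exact: lca_l. exact: lca_r.
Qed.

Lemma lcaC (x y : vert T) : lca x y = lca y x.
Proof.
apply: lca_uniq; [exact: lca_r | exact: lca_l | move=> w a b; exact: lca_min].
Qed.

Lemma lcaxx (x : vert T) : lca x x = x.
Proof. apply: lca_uniq; [exact: tle_refl | exact: tle_refl | by []]. Qed.

Lemma lca_tri (x y z : vert T) : lca x y != lca y z ->
  tle (lca x y) (lca y z) -> lca x z = lca y z.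
Proof.
move=> ne pq.
have rq : tle (lca x z) (lca y z).
  apply: lca_min; [exact: tle_trans (lca_l x y) pq | exact: lca_r].
case/orP: (tle_total (lca_l x z) (lca_l x y)) => h.
  have qp : tle (lca y z) (lca x y).
    apply: lca_min; [exact: lca_r | exact: tle_trans (lca_r x z) h].
  by rewrite (tle_antisym pq qp) eqxx in ne.
apply: tle_antisym => //; apply: lca_min.
  exact: tle_trans (lca_r x y) h.
exact: lca_r.
Qed.

Lemma leaf_min (x y : vert T) : leaf x -> tle y x -> y = x.
Proof.
case: (eqVneq y x) => // ne lx h.
have [c [hc cn hyc]] := side ne h.
move: lx => /andP [_ /eqP E].
have : c \in children x by rewrite inE hc eqxx cn.
by rewrite E inE.
Qed.

Lemma leaf_ne_root (x : vert T) : leaf x -> x != Defs.root0 T.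
Proof. by case/andP. Qed.

Lemma inner_not_leaf (x : vert T) : inner x -> ~~ leaf x.
Proof. by case/andP. Qed.

Lemma leaf_inner_neq (x y : vert T) : leaf x -> inner y -> x != y.
Proof.
move=> lx iy; apply/negP => /eqP E; move: iy; rewrite -E.
by move/inner_not_leaf; rewrite lx.
Qed.

Lemma lca_inner (x y : vert T) : leaf x -> leaf y -> x != y -> inner (lca x y).
Proof.
move=> lx ly ne; apply/andP; split.
  have [cx [px nx hx]] := side (leaf_ne_root lx) (tle_root x).
  have [cy [py ny hy]] := side (leaf_ne_root ly) (tle_root y).
  have /cards1P [r Hr] : #|children (Defs.root0 T)| == 1%N.
    by rewrite /children planted_root.
  have : cx \in children (Defs.root0 T) by rewrite inE px eqxx nx.
  have : cy \in children (Defs.root0 T) by rewrite inE py eqxx ny.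
  rewrite Hr !inE => /eqP E1 /eqP E2.
  apply/negP => /eqP E.
  have h : tle (Defs.root0 T) cx.
    rewrite -E; apply: lca_min => //; by rewrite E2 -E1.
  have := tle_antisym (tle_root cx) h; by move/eqP; rewrite (negbTE nx).
apply/negP => hl.
have E1 := leaf_min hl (lca_l x y).
have E2 := leaf_min hl (lca_r x y).
by move: ne; rewrite (etrans E1 (esym E2)) eqxx.
Qed.

Lemma lca_side1 (x a b ca cb : vert T) : par T ca = x -> par T cb = x ->
  ca != Defs.root0 T -> cb != Defs.root0 T -> tle a ca -> tle b cb ->
  lca a b = x -> ca != cb.
Proof.
move=> pa pb na nb ha hb E; apply/negP => /eqP Ec.
have h : tle (lca a b) ca by apply: lca_min => //; rewrite Ec.
rewrite E in h.
rewrite -pa in h.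
have E2 := tle_antisym (tle_par ca) h.
move: na; by rewrite (par_fix (esym E2)) eqxx.
Qed.

Lemma lca_side2 (x a b ca cb : vert T) : par T ca = x -> par T cb = x ->
  ca != Defs.root0 T -> cb != Defs.root0 T -> tle a ca -> tle b cb ->
  ca != cb -> lca a b = x.
Proof.
move=> pa pb na nb ha hb ne.
have hx : tle (lca a b) x.
  apply: lca_min.
    by apply: tle_trans ha _; rewrite -pa; exact: tle_par.
  by apply: tle_trans hb _; rewrite -pb; exact: tle_par.
case/orP: (tle_total (lca_l a b) ha) => h.
  have := side_uniq (etrans pa (esym pb)) na nb (tle_trans (lca_r a b) h) hb.
  by move=> E; rewrite E eqxx in ne.
case: (eqVneq ca (lca a b)) => [Ec|nc].
  have h' : tle b ca by rewrite Ec; exact: lca_r.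
  have := side_uniq (etrans pa (esym pb)) na nb h' hb.
  by move=> E; rewrite E eqxx in ne.
apply: tle_antisym => //; rewrite -pa; exact: tlt_par.
Qed.

End Tree.

Definition low (T : ptree) (a : loc T) : vert T :=
  match a with inl x => x | inr v => v end.

Lemma lle_low (T : ptree) (a b : loc T) : lle a b -> tle (low a) (low b).
Proof.
case: a => [x|v]; case: b => [y|w] //= h.
exact: tle_trans (tle_par v) h.
Qed.



Section Scen.
Variables (R : realType) (T S : ptree).
Variables (sigma : vert T -> vert S) (mu : vert T -> loc S).
Variables (tT : vert T -> R) (tS : vert S -> R).
Hypothesis HtT : time_map tT.
Hypothesis HtS : time_map tS.
Hypothesis Hsig : forall x, leaf x -> leaf (sigma x).
Hypothesis HS1 : forall x, (exists l, mu x = inl l /\ leaf l) <-> leaf x.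
Hypothesis HS1' : forall x, leaf x -> mu x = inl (sigma x).
Hypothesis HS2 : forall x u, mu x = inl u -> tS u = tT x.
Hypothesis HS3 : forall x v, mu x = inr v -> tS v < tT x /\ tT x < tS (par S v).
Hypothesis Hgen : generic mu tT tS.

Lemma sqo_ne x y : sqo_edge sigma mu x y -> sigma x != sigma y.
Proof.
case=> lx ly ne E; apply/negP => /eqP Es.
rewrite Es (lcaxx HtS) in E.
have : leaf (lca x y) by apply/HS1; exists (sigma y); split => //; exact: Hsig.
by apply/negP/inner_not_leaf/(lca_inner HtT).
Qed.

Lemma sqo_sym x y : sqo_edge sigma mu x y -> sqo_edge sigma mu y x.
Proof. by case=> lx ly ne E; split => //; [rewrite eq_sym | rewrite (lcaC HtT) (lcaC HtS (sigma y))]. Qed.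

Lemma sqo_edt x y : sqo_edge sigma mu x y -> edt_edge sigma tT tS x y.
Proof. by case=> lx ly ne E; split => //; rewrite (HS2 E). Qed.

Lemma edt_sqo x y : edt_edge sigma tT tS x y -> sqo_edge sigma mu x y.
Proof.
case=> lx ly ne E; split => //.
case: (eqVneq (sigma x) (sigma y)) => [Es|ns].
  rewrite Es (lcaxx HtS) -Es (HS2 (HS1' lx)) in E.
  have inn := lca_inner HtT lx ly ne.
  have := tlt_time HtT (leaf_inner_neq lx inn) (lca_l x y).
  by rewrite E ltxx.
apply: Hgen => //; [exact: (lca_inner HtT) | apply: (lca_inner HtS) => //; exact: Hsig].
Qed.

Lemma edt_wqo x y : edt_edge sigma tT tS x y -> wqo_edge mu x y.
Proof.
move=> /edt_sqo h; have ns := sqo_ne h; case: h => lx ly ne E; split => //.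
exists (lca (sigma x) (sigma y)); split => //; apply: (lca_inner HtS) => //; exact: Hsig.
Qed.

Lemma half x y z : sqo_edge sigma mu x y -> sqo_edge sigma mu y z -> x != z ->
  ~ sqo_edge sigma mu x z -> lca x y != lca y z -> ~ tle (lca x y) (lca y z).
Proof.
move=> [lx ly nxy E1] [_ lz nyz E2] nxz N ne pq; apply: N; split => //.
have t1 := HS2 E1; have t2 := HS2 E2.
have lt := tlt_time HtT ne pq.
case/orP: (tle_total (lca_r (sigma x) (sigma y)) (lca_l (sigma y) (sigma z))) => h.
  case: (eqVneq (lca (sigma x) (sigma y)) (lca (sigma y) (sigma z))) => [Eq|nS].
    by move: lt; rewrite -t1 -t2 Eq ltxx.
  by rewrite (lca_tri HtT ne pq) (lca_tri HtS nS h).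
have := tle_time HtS h; rewrite t1 t2 => le; by move: (lt_le_trans lt le); rewrite ltxx.
Qed.

Lemma merge_lca x y z : sqo_edge sigma mu x y -> sqo_edge sigma mu y z -> x != z ->
  ~ sqo_edge sigma mu x z ->
  lca x y = lca y z /\ lca (sigma x) (sigma y) = lca (sigma y) (sigma z).
Proof.
move=> e1 e2 nxz N.
have ET : lca x y = lca y z.
  case/orP: (tle_total (lca_r x y) (lca_l y z)) => h.
    case: (eqVneq (lca x y) (lca y z)) => // ne; by case: (half e1 e2 nxz N ne).
  case: (eqVneq (lca x y) (lca y z)) => // ne.
  have N' : ~ sqo_edge sigma mu z x by move/sqo_sym.
  have ne' : lca z y != lca y x by rewrite (lcaC HtT) (lcaC HtT y x) eq_sym.
  case: (half (sqo_sym e2) (sqo_sym e1) _ N' ne'); first by rewrite eq_sym.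
  by rewrite (lcaC HtT) (lcaC HtT y x).
split => //.
case: e1 => _ _ _ E1; case: e2 => _ _ _ E2.
have t1 := HS2 E1; have t2 := HS2 E2; rewrite ET in t1.
case/orP: (tle_total (lca_r (sigma x) (sigma y)) (lca_l (sigma y) (sigma z))) => h.
  by apply: (eq_time HtS h); rewrite t1 t2.
by apply/esym; apply: (eq_time HtS h); rewrite t1 t2.
Qed.

Hypothesis noH : forall v, ~ hgt_edge mu v.

Lemma mu_mono w : w != Defs.root0 T -> lle (mu w) (mu (par T w)).
Proof.
move=> nw.
have lt := tlt_time HtT (par_neq nw) (tle_par w).
have : Defs.comparable (mu (par T w)) (mu w).
  by apply/negP => nc; apply: (noH (v:=w)); split => //; apply/negP.
case/orP => // h.
move: h; case Ep: (mu (par T w)) => [x|v]; case Ew: (mu w) => [y|b] /= h.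
- case: (eqVneq x y) => [->|ne]; first exact: tle_refl.
  have := tlt_time HtS ne h; rewrite (HS2 Ep) (HS2 Ew) => l2; exfalso; lra.
- have := tle_time HtS h; rewrite (HS2 Ep) => l2.
  have [l3 _] := HS3 Ew; exfalso; lra.
- have := tle_time HtS h; rewrite (HS2 Ew) => l2.
  have [_ l3] := HS3 Ep; exfalso; lra.
- case: (eqVneq v b) => [->|ne]; first exact: tle_refl.
  have := tle_time HtS (tlt_par ne h) => l2.
  have [_ l3] := HS3 Ep; have [l4 _] := HS3 Ew; exfalso; lra.
Qed.

Lemma mu_chain x w : tle x w -> tle (low (mu x)) (low (mu w)).
Proof.
move=> /tle_iter [n ->]; elim: n => [|n IH]; first exact: tle_refl.
rewrite iterS; case: (eqVneq (iter n (par T) x) (Defs.root0 T)) => [E|ne].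
  by rewrite E Defs.par_root0 -E.
exact: tle_trans IH (lle_low (mu_mono ne)).
Qed.

Lemma key v U c : mu v = inl U -> par T c = v -> c != Defs.root0 T ->
  exists k, [/\ par S k = U, k != Defs.root0 S &
    forall x, leaf x -> tle x c -> tle (sigma x) k].
Proof.
move=> Ev pc nc.
have cv : tle c v by rewrite -pc; exact: tle_par.
have lt := tlt_time HtT (par_neq nc) (tle_par c); rewrite pc in lt.
have h := mu_chain cv; rewrite Ev /= in h.
have ne : low (mu c) != U.
  apply/negP => /eqP E; move: E; case Ec: (mu c) => [y|b] /= E.
    have l1 := HS2 Ec; have l2 := HS2 Ev; rewrite E in l1.
    move: lt; rewrite -l1 -l2 ltxx; done.
  have [l _] := HS3 Ec; have l2 := HS2 Ev; rewrite E in l.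
  move: (lt_trans l lt); rewrite l2 ltxx; done.
have [k [pk nk hk]] := side ne h.
exists k; split => // x lx xc.
have := mu_chain xc; rewrite (HS1' lx) /= => h2; exact: tle_trans h2 hk.
Qed.

End Scen.


Lemma two_alt (V : eqType) (c1 c2 p q r s : V) :
  (p == c1) || (p == c2) -> (q == c1) || (q == c2) ->
  (r == c1) || (r == c2) -> (s == c1) || (s == c2) ->
  p != q -> q != r -> r != s -> p != s.
Proof.
move=> /orP[]/eqP-> /orP[]/eqP-> /orP[]/eqP-> /orP[]/eqP->;
  rewrite ?eqxx //= => h1 h2 h3; by rewrite ?(eq_sym c2 c1).
Qed.

Unset Implicit Arguments.

Theorem theorem8 (R : realType) (T S : ptree)
    (sigma : vert T -> vert S) (mu : vert T -> loc S)
    (tT : vert T -> R) (tS : vert S -> R) :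
  relaxed_scenario sigma mu tT tS ->
  generic mu tT tS ->
  (forall x y, edt_edge sigma tT tS x y <-> sqo_edge sigma mu x y) /\
  (forall x y, edt_edge sigma tT tS x y -> wqo_edge mu x y) /\
  ((forall v, ~ hgt_edge mu v) \/ (binary T /\ binary S) ->
   cograph (@leaf T) (sqo_edge sigma mu)).
Proof.
move=> [HtT [HtS [Hsig [Hval [HS0 [HS1 [HS1' [HS2 HS3]]]]]]]] Hgen.
split; [move=> x y; split; [exact: (edt_sqo HtT HtS Hsig HS1' HS2 Hgen) | exact: (sqo_edt HS2)] | split].
  move=> x y; exact: (edt_wqo HtT HtS Hsig HS1 HS1' HS2 Hgen).
move=> Hcase [a [b [c [d [[Pa Pb Pc Pd] U4 [Eab Ebc Ecd] [Nac Nad Nbd]]]]]].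
move: U4; rewrite /= !inE !negb_or => /and4P [/and3P [nab nac nad] /andP [nbc nbd] ncd _].
have [Tab Sab] := merge_lca HtT HtS HS2 Eab Ebc nac Nac.
have [Tbc Sbc] := merge_lca HtT HtS HS2 Ebc Ecd nbd Nbd.
set v := lca b c in Tab Tbc.
set U := lca (sigma b) (sigma c) in Sab Sbc.
have Ev : mu v = inl U by case: Ebc.
have vin : inner v by exact: (lca_inner HtT Pb Pc nbc).
have Uin : inner U := lca_inner HtS (Hsig _ Pb) (Hsig _ Pc) (sqo_ne HtT HtS Hsig HS1 Ebc).
have hav : tle a v by rewrite -Tab; exact: lca_l.
have hbv : tle b v by exact: lca_l.
have hcv : tle c v by exact: lca_r.
have hdv : tle d v by rewrite Tbc; exact: lca_r.
have hau : tle (sigma a) U by rewrite -Sab; exact: lca_l.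
have hbu : tle (sigma b) U by exact: lca_l.
have hcu : tle (sigma c) U by exact: lca_r.
have hdu : tle (sigma d) U by rewrite Sbc; exact: lca_r.
have [ta [pta nta hat]] := side (leaf_inner_neq Pa vin) hav.
have [tb [ptb ntb hbt]] := side (leaf_inner_neq Pb vin) hbv.
have [tc [ptc ntc hct]] := side (leaf_inner_neq Pc vin) hcv.
have [td [ptd ntd hdt]] := side (leaf_inner_neq Pd vin) hdv.
have [sa [psa nsa has]] := side (leaf_inner_neq (Hsig _ Pa) Uin) hau.
have [sb [psb nsb hbs]] := side (leaf_inner_neq (Hsig _ Pb) Uin) hbu.
have [sc [psc nsc hcs]] := side (leaf_inner_neq (Hsig _ Pc) Uin) hcu.
have [sd [psd nsd hds]] := side (leaf_inner_neq (Hsig _ Pd) Uin) hdu.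
have tab : ta != tb := lca_side1 HtT pta ptb nta ntb hat hbt Tab.
have tbc : tb != tc := lca_side1 HtT ptb ptc ntb ntc hbt hct (erefl v).
have tcd : tc != td := lca_side1 HtT ptc ptd ntc ntd hct hdt (esym Tbc).
have sab : sa != sb := lca_side1 HtS psa psb nsa nsb has hbs Sab.
have sbc : sb != sc := lca_side1 HtS psb psc nsb nsc hbs hcs (erefl U).
have scd : sc != sd := lca_side1 HtS psc psd nsc nsd hcs hds (esym Sbc).
have NE : forall x y tx ty sx sy, leaf x -> leaf y -> x != y ->
    par T tx = v -> par T ty = v -> tx != Defs.root0 T -> ty != Defs.root0 T ->
    tle x tx -> tle y ty -> par S sx = U -> par S sy = U ->
    sx != Defs.root0 S -> sy != Defs.root0 S ->
    tle (sigma x) sx -> tle (sigma y) sy -> ~ sqo_edge sigma mu x y ->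
    tx = ty \/ sx = sy.
  move=> x y tx ty sx sy lx ly nxy ptx pty ntx nty hx hy psx psy nsx nsy hsx hsy N.
  case: (eqVneq tx ty) => [|ntt]; [by left|].
  case: (eqVneq sx sy) => [|nss]; [by right|].
  exfalso; apply: N; split => //.
  by rewrite (lca_side2 HtT ptx pty ntx nty hx hy ntt)
             (lca_side2 HtS psx psy nsx nsy hsx hsy nss).
have Nac' := NE _ _ _ _ _ _ Pa Pc nac pta ptc nta ntc hat hct psa psc nsa nsc has hcs Nac.
have Nad' := NE _ _ _ _ _ _ Pa Pd nad pta ptd nta ntd hat hdt psa psd nsa nsd has hds Nad.
have Nbd' := NE _ _ _ _ _ _ Pb Pd nbd ptb ptd ntb ntd hbt hdt psb psd nsb nsd hbs hds Nbd.
case: Hcase => [noH | [BT BS]].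
  have K : forall x y tx sx sy, leaf x -> leaf y ->
      par T tx = v -> tx != Defs.root0 T -> tle x tx -> tle y tx ->
      par S sx = U -> par S sy = U -> sx != Defs.root0 S -> sy != Defs.root0 S ->
      tle (sigma x) sx -> tle (sigma y) sy -> sx = sy.
    move=> x y tx sx sy lx ly ptx ntx hx hy psx psy nsx nsy hsx hsy.
    have [k [pk nk hk]] := key HtT HtS HS1' HS2 HS3 noH Ev ptx ntx.
    have E1 : sx = k by apply: (side_uniq HtS _ nsx nk hsx (hk x lx hx)); rewrite psx pk.
    have E2 : sy = k by apply: (side_uniq HtS _ nsy nk hsy (hk y ly hy)); rewrite psy pk.
    by rewrite E1 E2.
  have eac : sa = sc.
    case: Nac' => // E; rewrite -E in hct.
    exact: K Pa Pc pta nta hat hct psa psc nsa nsc has hcs.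
  have ebd : sb = sd.
    case: Nbd' => // E; rewrite -E in hdt.
    exact: K Pb Pd ptb ntb hbt hdt psb psd nsb nsd hbs hds.
  have ead : sa = sd.
    case: Nad' => // E; rewrite -E in hdt.
    exact: K Pa Pd pta nta hat hdt psa psd nsa nsd has hds.
  by move: sab; rewrite ead -ebd eqxx.
have /cards2P [c1 [c2 [_ EcT]]] : #|children v| == 2%N by rewrite BT.
have /cards2P [k1 [k2 [_ EcS]]] : #|children U| == 2%N by rewrite BS.
have memT : forall x, par T x = v -> x != Defs.root0 T -> (x == c1) || (x == c2).
  move=> x px nx; have : x \in children v by rewrite inE px eqxx nx.
  by rewrite EcT !inE.
have memS : forall x, par S x = U -> x != Defs.root0 S -> (x == k1) || (x == k2).
  move=> x px nx; have : x \in children U by rewrite inE px eqxx nx.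
  by rewrite EcS !inE.
have tad := two_alt (memT _ pta nta) (memT _ ptb ntb) (memT _ ptc ntc) (memT _ ptd ntd) tab tbc tcd.
have sad := two_alt (memS _ psa nsa) (memS _ psb nsb) (memS _ psc nsc) (memS _ psd nsd) sab sbc scd.
by case: Nad' => E; [move: tad | move: sad]; rewrite E eqxx.
Qed.
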